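(* Let $\lambda\ge0$, $\delta>0$, and let $\rho_c$ ($c>0$) be as in the context. Let $0<a<b$. Then for all $s<u<t$ and $x<z<y$, $$\rho_b(s,x,u,z)\rho_a(u,z,t,y)\le D\Big[\rho_{b-a}(s,x,u,z)\vee\rho_a(u,z,t,y)\Big]\rho_a(s,x,t,y),$$ with $D=\left(\frac{b}{b-a}\right)^{3/2}\exp\left[\frac32\, l\!\left(\frac{a}{b-a}\right)\right]$, where $$l(\alpha)=\max_{\tau\ge\alpha\vee1/\alpha}\left[\ln(1+\tau)-\frac{\tau-\alpha}{1+\tau}\ln(\alpha\tau)\right].$$
   Context: For $t>0$, $z\in\mathbb{R}$ let $p(t,z)=(4\pi)^{-1/2}\delta t z^{-3/2}\exp\{-(\delta t-2\sqrt{\lambda}z)^2/(4z)\}\mathbf 1_{z>0}$. For $c>0$ put $\rho_c(s,x,t,y)=c\,p(c(t-s),c(y-x))$ if $s<t$, and $0$ otherwise. *)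

(* Defs.v *)
From HB Require Import structures.
From mathcomp Require Import all_boot all_order all_algebra.
From mathcomp Require Import all_classical all_reals all_analysis.
Set Implicit Arguments. Unset Strict Implicit. Unset Printing Implicit Defensive.
Import Order.TTheory GRing.Theory Num.Theory.
Local Open Scope ring_scope.
Local Open Scope classical_set_scope.

Section Defs.
Variable R : realType.

Definition p_dens (lam delta t z : R) : R :=
  if 0 < z then
    powR (4 * pi) (- (1/2)) * delta * t * powR z (- (3/2)) *
    expR (- ((delta * t - 2 * Num.sqrt lam * z) ^+ 2 / (4 * z)))
  else 0.

Definition rho (lam delta c s x t y : R) : R :=
  if s < t then c * p_dens lam delta (c * (t - s)) (c * (y - x)) else 0.

Definition lfun (alpha : R) : R :=
  sup [set v | exists tau : R, Num.max alpha alpha^-1 <= tau /\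
        v = ln (1 + tau) - (tau - alpha) / (1 + tau) * ln (alpha * tau)].

Definition Dconst (a b : R) : R :=
  powR (b / (b - a)) (3/2) * expR (3/2 * lfun (a / (b - a))).

End Defs.

(* Main.v *)
Require Import Defs.
From HB Require Import structures.
From mathcomp Require Import all_boot all_order all_algebra.
From mathcomp Require Import all_classical all_reals all_analysis.
From mathcomp Require Import ring lra.
Import Order.TTheory GRing.Theory Num.Theory.
Local Open Scope ring_scope.

Section H1.
Variable R : realType.
Implicit Types x y : R.

Lemma lnMp x y : 0 < x -> 0 < y -> ln (x * y) = ln x + ln y.
Proof. by move=> hx hy; rewrite lnM // posrE. Qed.

Lemma lnDp x y : 0 < x -> 0 < y -> ln (x / y) = ln x - ln y.
Proof. by move=> hx hy; rewrite ln_div // posrE. Qed.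

Lemma ln_lexm1 x : 0 < x -> ln x <= x - 1.
Proof.
move=> hx; have h := @le_ln1Dx R (x - 1).
have e : 1 + (x - 1) = x by ring.
rewrite e in h; apply: h; lra.
Qed.

Lemma ln_mono x y : 0 < x -> x <= y -> ln x <= ln y.
Proof. by move=> hx hxy; rewrite ler_ln // posrE; lra. Qed.

Lemma jensen2 (w1 w2 p q : R) : 0 <= w1 -> 0 <= w2 -> w1 + w2 = 1 -> 0 < p -> 0 < q ->
  w1 * ln p + w2 * ln q <= ln (w1 * p + w2 * q).
Proof.
move=> h1 h2 hs hp hq.
have hC : 0 < w1 * p + w2 * q.
  case: (ltrP 0 w1) => hw1; first by apply: ltr_wpDr; [nra| nra].
  have -> : w1 = 0 by lra.
  by rewrite mul0r add0r mulr_gt0 //; lra.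
set C := w1 * p + w2 * q in hC *.
have e1 := @ln_lexm1 (p / C) (divr_gt0 hp hC).
have e2 := @ln_lexm1 (q / C) (divr_gt0 hq hC).
rewrite lnDp // in e1; rewrite lnDp // in e2.
have : w1 * (ln p - ln C) + w2 * (ln q - ln C) <= w1 * (p / C - 1) + w2 * (q / C - 1).
  by apply: lerD; apply: ler_wpM2l.
have -> : w1 * (p / C - 1) + w2 * (q / C - 1) = 0.
  have hC0 : C != 0 by rewrite gt_eqF.
  move: hC0; rewrite /C; have -> : w2 = 1 - w1 by lra.
  by move=> hC0; field.
move=> h; have -> : ln C = (w1 + w2) * ln C by rewrite hs mul1r.
lra.
Qed.

End H1.

Section H2.
Variable R : realType.

Lemma rho_gt0 (lam delta c s x t y : R) : 0 < delta -> 0 < c -> s < t -> x < y ->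
  0 < rho lam delta c s x t y.
Proof.
move=> hd hc hst hxy; rewrite /rho hst /p_dens.
have hX : 0 < c * (y - x) by rewrite mulr_gt0 // subr_gt0.
have hT : 0 < c * (t - s) by rewrite mulr_gt0 // subr_gt0.
have h4 : 0 < powR (4 * pi) (- (1/2)) :> R by apply: powR_gt0; rewrite mulr_gt0 // pi_gt0.
rewrite hX mulr_gt0 // !mulr_gt0 ?powR_gt0 ?expR_gt0 ?subr_gt0 //.
by rewrite mulr_gt0 // pi_gt0.
Qed.

Lemma ln_rho (lam delta c s x t y : R) : 0 < delta -> 0 < c -> s < t -> x < y ->
  ln (rho lam delta c s x t y) =
  ln (powR (4 * pi) (- (1/2))) + ln delta + ln c / 2 + ln (t - s) - 3/2 * ln (y - x)
  - c * ((delta * (t - s) - 2 * Num.sqrt lam * (y - x)) ^+ 2 / (4 * (y - x))).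
Proof.
move=> hd hc hst hxy; rewrite /rho hst /p_dens.
have hy : 0 < y - x by rewrite subr_gt0.
have ht : 0 < t - s by rewrite subr_gt0.
have hX : 0 < c * (y - x) by rewrite mulr_gt0.
have hT : 0 < c * (t - s) by rewrite mulr_gt0.
have h4 : 0 < powR (4 * pi) (- (1/2)) :> R by apply: powR_gt0; rewrite mulr_gt0 // pi_gt0.
rewrite hX.
set P := powR (4 * pi) _ in h4 *.
set W := powR (c * (y - x)) _.
set V := expR _.
have hW : 0 < W by rewrite powR_gt0.
have hV : 0 < V by rewrite expR_gt0.
have p1 : 0 < P * delta by rewrite mulr_gt0.
have p2 : 0 < P * delta * (c * (t - s)) by rewrite mulr_gt0.
have p3 : 0 < P * delta * (c * (t - s)) * W by rewrite mulr_gt0.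
have p4 : 0 < P * delta * (c * (t - s)) * W * V by rewrite mulr_gt0.
rewrite !lnMp //.
rewrite /V /W expRK ln_powR !lnMp //.
have hc0 : c != 0 by rewrite gt_eqF.
have hy0 : y - x != 0 by rewrite gt_eqF.
by field; rewrite hy0 hc0.
Qed.

Lemma lfun_ge (al : R) : 0 < al -> ln (1 + Num.max al al^-1) <= lfun al.
Proof.
move=> ha; rewrite /lfun.
set M := Num.max al al^-1.
have hM1 : al <= M by rewrite le_max lexx.
have hM2 : al^-1 <= M by rewrite le_max lexx orbT.
have hai : 0 < al^-1 by rewrite invr_gt0.
apply: ub_le_sup.
  exists (ln (1 + al^-1) + al * (1 + al)) => v [tau [htau ->]].
  have ht1 : al <= tau by apply: le_trans htau.
  have ht2 : al^-1 <= tau by apply: le_trans htau.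
  have ht0 : 0 < tau by apply: lt_le_trans ht2.
  have hat : 1 <= al * tau.
    by rewrite -(divff (lt0r_neq0 ha)) ler_pM2l.
  have hL0 : 0 <= ln (al * tau) by apply: ln_ge0.
  have hL1 : ln (al * tau) <= al * tau.
    by have := @ln_lexm1 R (al * tau) ltac:(lra); lra.
  have h1 : ln (1 + tau) <= ln (1 + al^-1) + ln (al * tau).
    rewrite -lnMp; last by lra. 2: lra.
    apply: ln_mono; first by lra.
    rewrite mulrDl mul1r mulrA mulVf ?gt_eqF // mul1r; lra.
  have e : ln (al * tau) - (tau - al) / (1 + tau) * ln (al * tau)
           = ln (al * tau) * (1 + al) / (1 + tau).
    by field; rewrite gt_eqF //; lra.
  have h2 : ln (al * tau) * (1 + al) / (1 + tau) <= al * (1 + al).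
    rewrite ler_pdivrMr; last by lra.
    have : ln (al * tau) <= al * (1 + tau) by nra.
    nra.
  lra.
exists M; split => //.
case: (lerP al al^-1) => h.
- have -> : M = al^-1 by rewrite /M; apply/max_idPr.
  by rewrite mulfV ?gt_eqF // ln1 mulr0 subr0.
- have -> : M = al by rewrite /M; apply/max_idPl; rewrite ltW.
  by rewrite subrr mul0r mul0r subr0.
Qed.

End H2.

Section H3.
Variable R : realType.

Lemma polyF6 (a b lM : R) : 0 < a -> a < b ->
  ln b - ln (b - a) <= lM -> ln b - ln a <= lM ->
  3/2 * (ln (2 * b - a) - ln b) <= lM.
Proof.
move=> ha hab h1 h2.
have hb : 0 < b by lra.
have hbe : 0 < b - a by lra.
have h2b : 0 < 2 * b - a by lra.
case: (lerP b (2 * a)) => hc.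
- suff : 3 * ln (2 * b - a) + 2 * ln (b - a) <= 5 * ln b by lra.
  have e1 : ln ((2 * b - a) ^+ 3 * (b - a) ^+ 2) = 3 * ln (2 * b - a) + 2 * ln (b - a).
    by rewrite lnMp ?exprn_gt0 // !lnXn // !mulr_natl.
  have e2 : ln (b ^+ 5) = 5 * ln b by rewrite lnXn // mulr_natl.
  rewrite -e1 -e2; apply: ln_mono; first by rewrite mulr_gt0 ?exprn_gt0.
  set c := b - a; set e := a - c.
  have hc0 : 0 <= c by rewrite /c; lra.
  have he0 : 0 <= e by rewrite /e /c; lra.
  have -> : 2 * b - a = 3 * c + e by rewrite /e /c; ring.
  have -> : b = 2 * c + e by rewrite /e /c; ring.
  rewrite -subr_ge0.
  have -> : (2 * c + e) ^+ 5 - (3 * c + e) ^+ 3 * c ^+ 2 =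
    5*c^+5 + 53*c^+4*e + 71*c^+3*e^+2 + 39*c^+2*e^+3 + 10*c*e^+4 + e^+5 by ring.
  by rewrite !addr_ge0 ?mulr_ge0 ?exprn_ge0 ?ler0n.
- suff : 3 * ln (2 * b - a) + 2 * ln a <= 5 * ln b by lra.
  have e1 : ln ((2 * b - a) ^+ 3 * a ^+ 2) = 3 * ln (2 * b - a) + 2 * ln a.
    by rewrite lnMp ?exprn_gt0 // !lnXn // !mulr_natl.
  have e2 : ln (b ^+ 5) = 5 * ln b by rewrite lnXn // mulr_natl.
  rewrite -e1 -e2; apply: ln_mono; first by rewrite mulr_gt0 ?exprn_gt0.
  set d := b - 2 * a.
  have hd0 : 0 <= d by rewrite /d; lra.
  have ha0 : 0 <= a by lra.
  have -> : 2 * b - a = 3 * a + 2 * d by rewrite /d; ring.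
  have -> : b = 2 * a + d by rewrite /d; ring.
  rewrite -subr_ge0.
  have -> : (2 * a + d) ^+ 5 - (3 * a + 2 * d) ^+ 3 * a ^+ 2 =
    5*a^+5 + 26*a^+4*d + 44*a^+3*d^+2 + 32*a^+2*d^+3 + 10*a*d^+4 + d^+5 by ring.
  by rewrite !addr_ge0 ?mulr_ge0 ?exprn_ge0 ?ler0n.
Qed.

Lemma core (a b h k X Y del sq lM lD : R) :
  0 < a -> a < b -> 0 < h -> 0 < k -> 0 < X -> 0 < Y ->
  ln b - ln (b - a) <= lM -> ln b - ln a <= lM ->
  3/2 * (ln b - ln (b - a)) + 3/2 * lM <= lD ->
  let Q1 := (del * h - 2 * sq * X) ^+ 2 / (4 * X) in
  let Q2 := (del * k - 2 * sq * Y) ^+ 2 / (4 * Y) in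
  let Q3 := (del * (h + k) - 2 * sq * (X + Y)) ^+ 2 / (4 * (X + Y)) in
  let E1 := ln b / 2 - ln (b - a) / 2 + ln k - 3/2 * ln Y - ln (h + k)
            + 3/2 * ln (X + Y) - b * Q1 - a * Q2 + (b - a) * Q1 + a * Q3 in
  let E2 := ln b / 2 - ln a / 2 + ln h - 3/2 * ln X - ln (h + k)
            + 3/2 * ln (X + Y) - b * Q1 + a * Q3 in
  E1 <= lD \/ E2 <= lD.
Proof.
move=> ha hab hh hk hX hY hM1 hM2 hD Q1 Q2 Q3 E1 E2.
have hbe : 0 < b - a by lra.
have hb : 0 < b by lra.
have hXY : 0 < X + Y by lra.
have hhk : 0 < h + k by lra.
have f1 : ln k <= ln (h + k) by apply: ln_mono; lra.
have f2 : ln h <= ln (h + k) by apply: ln_mono; lra.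
have fb : 0 <= ln b - ln (b - a).
  rewrite -lnDp //; apply: ln_ge0; rewrite ler_pdivlMr // mul1r; lra.
have hQ : Q1 + Q2 - Q3 = (del * h * Y - del * k * X) ^+ 2 / (4 * (X * Y * (X + Y))).
  rewrite /Q1 /Q2 /Q3; field.
  by rewrite !gt_eqF.
have hQ0 : 0 <= a * (Q1 + Q2 - Q3).
  rewrite hQ; apply: mulr_ge0; first lra.
  by apply: divr_ge0; [apply: sqr_ge0 | rewrite !mulr_ge0 //; lra].
case: (lerP ((b - a) * X) (a * Y)) => hc.
- left.
  have fX : ln (X + Y) - ln Y <= ln b - ln (b - a).
    rewrite -!lnDp //; apply: ln_mono; first by rewrite divr_gt0.
    rewrite ler_pdivrMr // mulrAC ler_pdivlMr //; nra.
  have -> : E1 = (ln b - ln (b - a)) / 2 + (ln k - ln (h + k))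
       + 3/2 * (ln (X + Y) - ln Y) - a * (Q1 + Q2 - Q3) by rewrite /E1; ring.
  lra.
- set w1 := b * Y / ((b - a) * (X + Y)).
  set w2 := ((b - a) * X - a * Y) / ((b - a) * (X + Y)).
  have hw1 : 0 < w1 by rewrite /w1 !mulr_gt0 // invr_gt0 mulr_gt0.
  have hw2 : 0 <= w2 by rewrite /w2 divr_ge0 //; [lra | rewrite mulr_ge0 //; lra].
  have hws : w1 + w2 = 1.
    by rewrite /w1 /w2; field; rewrite !gt_eqF.
  have hq : w1 * (- a * Q1 - a * Q2 + a * Q3) + w2 * (- b * Q1 + a * Q3) <= 0.
    have -> : w1 * (- a * Q1 - a * Q2 + a * Q3) + w2 * (- b * Q1 + a * Q3) =
      - ((((b - a) * X - a * Y) * sq - ((b - a) * (del * h / 2) - a * (del * k / 2))) ^+ 2)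
      / ((b - a) * (X + Y)).
      by rewrite /w1 /w2 /Q1 /Q2 /Q3; field; rewrite !gt_eqF.
    rewrite mulNr oppr_le0; apply: divr_ge0; first exact: sqr_ge0.
    by rewrite mulr_ge0 //; lra.
  have hA : w1 * (ln b - ln (b - a)) + w2 * (ln b - ln a) <= lM.
    have := lerD (ler_wpM2l (ltW hw1) hM1) (ler_wpM2l hw2 hM2).
    by rewrite -mulrDl hws mul1r.
  have hB1 : w1 * (ln k - ln (h + k)) <= 0 by apply: mulr_ge0_le0; lra.
  have hB2 : w2 * (ln h - ln (h + k)) <= 0 by apply: mulr_ge0_le0; lra.
  have hC : w1 * (ln (X + Y) - ln Y) + w2 * (ln (X + Y) - ln X)
            <= ln (2 * b - a) - ln (b - a).
    rewrite -!lnDp //; last by lra.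
    apply: le_trans (@jensen2 R w1 w2 ((X + Y) / Y) ((X + Y) / X) (ltW hw1) hw2 hws (divr_gt0 hXY hY) (divr_gt0 hXY hX)) _.
    apply: ln_mono.
      by apply: ltr_wpDr; [rewrite mulr_ge0 // ltW // divr_gt0 | rewrite mulr_gt0 // divr_gt0].
    have -> : w1 * ((X + Y) / Y) + w2 * ((X + Y) / X) =
              b / (b - a) + ((b - a) * X - a * Y) / ((b - a) * X).
      by rewrite /w1 /w2; field; rewrite !gt_eqF.
    have -> : (2 * b - a) / (b - a) = b / (b - a) + 1.
      by field; rewrite gt_eqF.
    rewrite lerD2l ler_pdivrMr ?mul1r ?mulr_gt0 //; nra.
  have hF6 := @polyF6 a b lM ha hab hM1 hM2.
  have hid : w1 * E1 + w2 * E2 =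
     (w1 * (ln b - ln (b - a)) + w2 * (ln b - ln a)) / 2
     + w1 * (ln k - ln (h + k)) + w2 * (ln h - ln (h + k))
     + 3/2 * (w1 * (ln (X + Y) - ln Y) + w2 * (ln (X + Y) - ln X))
     + (w1 * (- a * Q1 - a * Q2 + a * Q3) + w2 * (- b * Q1 + a * Q3)).
    rewrite /E1 /E2; ring.
  have key : w1 * E1 + w2 * E2 <= lD by rewrite hid; lra.
  case: (lerP E1 lD) => h1; [by left | right].
  nra.
Qed.

End H3.

Theorem theorem2p2 (R : realType) (lam delta a b s u t x z y : R) :
  0 <= lam -> 0 < delta -> 0 < a -> a < b ->
  s < u -> u < t -> x < z -> z < y ->
  rho lam delta b s x u z * rho lam delta a u z t y <=
  Dconst a b * Num.max (rho lam delta (b - a) s x u z) (rho lam delta a u z t y)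
    * rho lam delta a s x t y.
Proof.
move=> hl hd ha hab hsu hut hxz hzy.
have hb : 0 < b by lra.
have hbe : 0 < b - a by lra.
have hst : s < t by lra.
have hxy : x < y by lra.
have r1 := @rho_gt0 R lam delta b s x u z hd hb hsu hxz.
have r2 := @rho_gt0 R lam delta a u z t y hd ha hut hzy.
have r3 := @rho_gt0 R lam delta (b - a) s x u z hd hbe hsu hxz.
have r4 := @rho_gt0 R lam delta a s x t y hd ha hst hxy.
have l1 := @ln_rho R lam delta b s x u z hd hb hsu hxz.
have l2 := @ln_rho R lam delta a u z t y hd ha hut hzy.
have l3 := @ln_rho R lam delta (b - a) s x u z hd hbe hsu hxz.
have l4 := @ln_rho R lam delta a s x t y hd ha hst hxy.
have et : t - s = (u - s) + (t - u) by ring.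
have ey : y - x = (z - x) + (y - z) by ring.
rewrite et ey in l4.
set P1 := rho lam delta b s x u z in r1 l1 *.
set P2 := rho lam delta a u z t y in r2 l2 *.
set P3 := rho lam delta (b - a) s x u z in r3 l3 *.
set P4 := rho lam delta a s x t y in r4 l4 *.
have hDp : 0 < Dconst a b.
  by rewrite /Dconst mulr_gt0 ?expR_gt0 // powR_gt0 // divr_gt0.
have lD : ln (Dconst a b) = 3/2 * (ln b - ln (b - a)) + 3/2 * lfun (a / (b - a)).
  rewrite /Dconst lnMp ?powR_gt0 ?expR_gt0 ?divr_gt0 // ln_powR expRK lnDp //.
set al := a / (b - a).
have hal : 0 < al by rewrite divr_gt0.
set M := Num.max al al^-1.
have hM1 : ln b - ln (b - a) <= ln (1 + M).
  rewrite -lnDp //; apply: ln_mono; first by rewrite divr_gt0.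
  have -> : b / (b - a) = 1 + al by rewrite /al; field; rewrite gt_eqF.
  by rewrite lerD2l le_max lexx.
have hM2 : ln b - ln a <= ln (1 + M).
  rewrite -lnDp //; apply: ln_mono; first by rewrite divr_gt0.
  have -> : b / a = 1 + al^-1 by rewrite /al invf_div; field; rewrite gt_eqF.
  by rewrite lerD2l le_max lexx orbT.
have hD : 3/2 * (ln b - ln (b - a)) + 3/2 * ln (1 + M) <= ln (Dconst a b).
  by rewrite lD; have := @lfun_ge R al hal; rewrite -/M; lra.
have hh : 0 < u - s by lra.
have hk : 0 < t - u by lra.
have hX : 0 < z - x by lra.
have hY : 0 < y - z by lra.
have C := @core R a b (u - s) (t - u) (z - x) (y - z) delta (Num.sqrt lam)
  (ln (1 + M)) (ln (Dconst a b)) ha hab hh hk hX hY hM1 hM2 hD.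
cbv zeta in C.
have fin : ln P1 + ln P2 <= ln (Dconst a b) + ln P3 + ln P4 \/
           ln P1 + ln P2 <= ln (Dconst a b) + ln P2 + ln P4.
  rewrite l1 l2 l3 l4.
  case: C => C; [left | right]; lra.
have hm3 : P3 <= Num.max P3 P2 by rewrite le_max lexx.
have hm2 : P2 <= Num.max P3 P2 by rewrite le_max lexx orbT.
have e0 : ln P1 + ln P2 = ln (P1 * P2) by rewrite lnMp //.
have e3 : ln (Dconst a b) + ln P3 + ln P4 = ln (Dconst a b * P3 * P4).
  have pD : 0 < Dconst a b * P3 by rewrite mulr_gt0.
  by rewrite (@lnMp R _ _ pD r4) (@lnMp R _ _ hDp r3).
have e2 : ln (Dconst a b) + ln P2 + ln P4 = ln (Dconst a b * P2 * P4).
  have pD : 0 < Dconst a b * P2 by rewrite mulr_gt0.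
  by rewrite (@lnMp R _ _ pD r4) (@lnMp R _ _ hDp r2).
have q1 : 0 < P1 * P2 by rewrite mulr_gt0.
have q3 : 0 < Dconst a b * P3 * P4 by apply: mulr_gt0 => //; apply: mulr_gt0.
have q2 : 0 < Dconst a b * P2 * P4 by apply: mulr_gt0 => //; apply: mulr_gt0.
case: fin => [fin|fin].
  rewrite e0 e3 ler_ln ?posrE // in fin.
  apply: le_trans fin _.
  rewrite ler_pM2r //.
  by rewrite ler_pM2l.
rewrite e0 e2 ler_ln ?posrE // in fin.
apply: le_trans fin _.
by rewrite ler_pM2r // ler_pM2l.
Qed.
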